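(* Let $x \in \mathbb{Z}$ and let $m \in \mathbb{N}$ be odd with $m \geq 3$. Suppose $\left\lfloor \frac{x^2+7}{4} \right\rfloor = 2^m$. Then, in the ring of integers $\mathcal{O}_K$ of $K = \mathbb{Q}(\sqrt{-7})$, we have $1 - 2\theta = \theta^m - \theta'^m$, where $\theta = \frac{1+\sqrt{-7}}{2}$ and $\theta' = 1-\theta = \frac{1-\sqrt{-7}}{2}$ (equivalently, $-\sqrt{-7} = \theta^m - \theta'^m$).
   Context: $K = \mathbb{Q}(\sqrt{-7})$ with a fixed square root $\sqrt{-7}$; $\theta = \frac{1+\sqrt{-7}}{2}$ is the root of $X^2 - X + 2$, which lies in $\mathcal{O}_K$, and $\theta' = 1 - \theta$. The quotient $\lfloor\cdot\rfloor$ denotes integer (floor) division, as in the formal statement. *)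

(* Defs.v *)
From mathcomp Require Import all_boot all_order all_algebra all_field.
Set Implicit Arguments. Unset Strict Implicit. Unset Printing Implicit Defensive.
Import Order.TTheory GRing.Theory Num.Theory.
Local Open Scope ring_scope.

(* K = Q(sqrt(-7)) is realized inside the algebraic complex numbers algC;
   O_K = Z[theta] is a subring of algC, so equality in O_K is equality in algC. *)

Definition sqrtm7 : algC := sqrtC (- 7%:R).

Definition theta : algC := (1 + sqrtm7) / 2%:R.

Definition theta' : algC := 1 - theta.

(* Main.v *)
Require Import Defs.
From mathcomp Require Import all_boot all_order all_algebra all_field.
From mathcomp Require Import zify ring lra.
Import Order.TTheory GRing.Theory Num.Theory.
Local Open Scope ring_scope.

Fixpoint ps (k : nat) : int * int :=
  match k with
  | 0%N => (1, 0)
  | k'.+1 => (-2 * (ps k').2, (ps k').1 + (ps k').2)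
  end.

Definition nrm (a b : int) := a * a + a * b + 2 * (b * b).
Definition NE (a b : int) := ~ (exists c d, a = 2 * c /\ b = 2 * d).
Definition P k (a b : int) := exists e : int, (e = 1 \/ e = -1) /\
  ((e * a, e * b) = ps k \/ (e * (a + b), - (e * b)) = ps k).

Lemma parity (a : int) : exists c, a = 2 * c \/ a = 2 * c + 1.
Proof. exists (a %/ 2)%Z. lia. Qed.

Lemma ps_even k : exists u, (ps k.+1).1 = 2 * u.
Proof. exists (- (ps k).2) => /=. lia. Qed.

Lemma step_even k :
  (forall a b, nrm a b = 2 ^+ k -> NE a b -> P k a b) ->
  forall a b, nrm a b = 2 ^+ k.+1 -> NE a b -> (exists c, a = 2 * c) -> P k.+1 a b.
Proof.
move=> IH a b Hn Hne [c Hc]; subst a.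
have Hv : nrm (c + b) (- c) = 2 ^+ k.
  move: Hn; rewrite /nrm exprS => Hn. nia.
have Hnv : NE (c + b) (- c).
  move=> [e [f [H1 H2]]]; apply: Hne; exists (-2 * f), (e + f). lia.
have [e [He [H|H]]] := IH _ _ Hv Hnv.
  exists e; split => //; left => /=; rewrite -H /=. congr pair; lia.
case: k IH Hn Hv H => [|k] IH Hn Hv H.
  move: H => /= [H1 H2].
  exists e; split => //; left => /=. congr pair; nia.
have [u Hu] := ps_even k.
move: H; case E: (ps k.+1) => [p q] [H1 H2].
rewrite E /= in Hu.
exfalso; apply: Hne; exists c.
case: He => He; subst e; [exists u| exists (- u)]; split; lia.
Qed.

Lemma desc k : forall a b, nrm a b = 2 ^+ k -> NE a b -> P k a b.
Proof.
elim: k => [|k IH] a b Hn Hne.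
  have H4 : (2*a+b)*(2*a+b) + 7*(b*b) = 4 by move: Hn; rewrite /nrm expr0 => Hn; lia.
  have Hb : b = 0.
    have := sqr_ge0 (2*a+b); have := sqr_ge0 b; rewrite !expr2 => h1 h2.
    have : b * b == 0 by rewrite eq_le h1; apply/andP; split => //; lia.
    by rewrite mulf_eq0 orbb => /eqP.
  subst b; have : a * a = 1 by move: Hn; rewrite /nrm expr0 => Hn; lia.
  have [Ha|Ha] : a = 1 \/ a = -1 by nia.
    by exists 1; split; [left|left; rewrite Ha].
  by exists (-1); split; [right|left; rewrite Ha].
have [c [Hc|Hc]] := parity a.
  by apply: step_even => //; exists c.
have [d [Hd|Hd]] := parity b.
  exfalso; move: Hn; rewrite /nrm exprS; subst; lia.
have Hn' : nrm (a + b) (- b) = 2 ^+ k.+1 by move: Hn; rewrite /nrm; lia.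
have Hne' : NE (a + b) (- b).
  move=> [e [f [H1 H2]]]; subst; lia.
have Hev : exists c0, a + b = 2 * c0 by exists (c + d + 1); lia.
have [e [He H]] := @step_even k IH _ _ Hn' Hne' Hev.
exists e; split => //.
case: H => H; [right|left]; rewrite -H; congr pair; lia.
Qed.

Lemma ps_mod4 n : exists u v, ps (2 * n + 3)%N = (4 * u + 2, 4 * v + 3).
Proof.
elim: n => [|n [u [v IH]]]; first by exists (-1), (-1).
have -> : (2 * n.+1 + 3 = (2 * n + 3).+2)%N by lia.
rewrite /= IH /=.
exists (- 2 * u - 2 * v - 3), (u - v - 1). congr pair; lia.
Qed.

Lemma pow_theta (R : comRingType) (t : R) : t ^+ 2 = t - 2%:R ->
  forall k, t ^+ k = (ps k).1%:~R + (ps k).2%:~R * t.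
Proof.
move=> Ht; elim => [|k IH]; first by rewrite /= expr0 mul0r addr0.
have Et : t * t = t - 2%:R by rewrite -expr2.
rewrite exprS IH /=.
transitivity ((ps k).1%:~R * t + (ps k).2%:~R * (t * t)); first by ring.
rewrite Et !intrD !intrM. ring.
Qed.

Theorem mainTheorem2 (x : int) (m : nat) :
  odd m -> (3 <= m)%N ->
  ((x ^+ 2 + 7) %/ 4)%Z = (2 ^ m)%N%:Z ->
  theta ^+ m - theta' ^+ m = 1 - 2%:R * theta.
Proof.
move=> Hodd H3 H.
have [n Hm] : exists n, m = (2 * n + 3)%N.
  have := odd_double_half m; rewrite Hodd -muln2 => hm.
  exists (m./2 - 1)%N; clear H Hodd; lia.
have E2 : (2 ^ m)%N%:Z = 2 ^+ m by rewrite -natz natrX.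
rewrite E2 expr2 in H.
have E3 : (2:int) ^+ m = 8 * 2 ^+ (2 * n) by rewrite Hm addnC exprD.
have [c [Hc|Hc]] := parity x; subst x.
  exfalso. have [d [Hd|Hd]] := parity c; subst c; lia.
have Hn : nrm c 1 = 2 ^+ m by rewrite /nrm; lia.
have Hne : NE c 1 by move=> [p [q [H1 H2]]]; lia.
have [e [He Hps]] := @desc m _ _ Hn Hne.
have [u [v Hm4]] := ps_mod4 n.
rewrite -Hm in Hm4.
have HB : (ps m).2 = -1.
  rewrite Hm4 /=; rewrite Hm4 in Hps; case: Hps => [[_ H2]|[_ H2]]; lia.
have Hs : sqrtm7 ^+ 2 = - 7%:R by rewrite /sqrtm7 sqrtCK.
have Ht : theta ^+ 2 = theta - 2%:R.
  rewrite /theta.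
  transitivity ((1 + 2%:R * sqrtm7 + sqrtm7 ^+ 2) / 4%:R).
    by field.
  by rewrite Hs; field.
have Ht' : theta' ^+ 2 = theta' - 2%:R.
  rewrite /theta'.
  transitivity (1 - 2%:R * theta + theta ^+ 2); first by ring.
  rewrite Ht; ring.
rewrite (@pow_theta _ theta Ht m) (@pow_theta _ theta' Ht' m) HB /theta'.
ring.
Qed.
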